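(* For either choice $\zeta\in\{q,-q^3\}$, the function $\bar{\mathcal{F}}(v_1,v_2\mid\lambda_1,\dots,\lambda_{L-1})=\langle\bar0|\mathcal{B}(v_2)\mathcal{B}(v_1)\mathcal{E}(\lambda_{L-1})\cdots\mathcal{E}(\lambda_1)|0\rangle$ vanishes whenever $y_2=e^{2v_2}=e^{2\mu_j}$ for some $1\le j\le L$.
   Context: Let $q\in\mathbb{C}\setminus\{0\}$ (with a fixed choice of $q^{1/2}$) and $\zeta\in\{q,-q^3\}$ ($\zeta=q$: Fateev–Zamolodchikov model; $\zeta=-q^3$: Izergin–Korepin model). For $\lambda\in\mathbb{C}$ put $x=e^{2\lambda}$ and define $a(\lambda)=(x-\zeta)(x-q^2)$, $b(\lambda)=q(x-1)(x-\zeta)$, $c(\lambda)=(1-q^2)(x-\zeta)$, $\bar c(\lambda)=x(1-q^2)(x-\zeta)$, and for $\alpha,\beta\in\{1,2,3\}$, with $\beta'=4-\beta$: $d_{\alpha,\beta}(\lambda)=q(x-1)(x-\zeta)+x(q^2-1)(\zeta-1)$ if $\alpha=\beta=2$; $d_{\alpha,\beta}(\lambda)=(x-1)[(x-\zeta)+x(q^2-1)]$ if $\alpha=\beta\neq 2$; $d_{\alpha,\beta}(\lambda)=(q^2-1)[\zeta(x-1)q^{(\alpha-\beta)/2}-\delta_{\alpha,\beta'}(x-\zeta)]$ if $\alpha<\beta$; $d_{\alpha,\beta}(\lambda)=x(q^2-1)[(x-1)q^{(\alpha-\beta)/2}-\delta_{\alpha,\beta'}(x-\zeta)]$ if $\alpha>\beta$.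 Let $e_1,e_2,e_3$ be the standard basis of $\mathbb{C}^3$ and $E_{\alpha,\beta}$ the unit matrices. Define $\mathcal{R}(\lambda)\in\mathrm{End}(\mathbb{C}^3\otimes\mathbb{C}^3)$ as the $9\times 9$ matrix in the ordered basis $e_1\otimes e_1,e_1\otimes e_2,e_1\otimes e_3,e_2\otimes e_1,e_2\otimes e_2,e_2\otimes e_3,e_3\otimes e_1,e_3\otimes e_2,e_3\otimes e_3$ (indices $1,\dots,9$) whose only nonzero entries (row, column) are: $(1,1)=a$; $(2,2)=b$, $(2,4)=c$; $(3,3)=d_{1,1}$, $(3,5)=d_{1,2}$, $(3,7)=d_{1,3}$; $(4,2)=\bar c$, $(4,4)=b$; $(5,3)=d_{2,1}$, $(5,5)=d_{2,2}$, $(5,7)=d_{2,3}$; $(6,6)=b$, $(6,8)=c$; $(7,3)=d_{3,1}$, $(7,5)=d_{3,2}$, $(7,7)=d_{3,3}$; $(8,6)=\bar c$, $(8,8)=b$; $(9,9)=a$ (all evaluated at $\lambda$). Fix $L\ge1$ and inhomogeneities $\mu_1,\dots,\mu_L\in\mathbb{C}$. With $V_a=V_1=\dots=V_L=\mathbb{C}^3$, let $\mathcal{T}(\lambda)=\mathcal{R}_{a1}(\lambda-\mu_1)\cdots\mathcal{R}_{aL}(\lambda-\mu_L)$, where $\mathcal{R}_{aj}$ acts as $\mathcal{R}$ on $V_a\otimes V_j$. Write $\mathcal{T}(\lambda)=\sum_{\alpha,\beta}E_{\alpha,\beta}\otimes\mathcal{T}_\alpha^\beta(\lambda)$ and set $\mathcal{B}(\lambda)=\mathcal{T}_1^2(\lambda)$,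 $\mathcal{E}(\lambda)=\mathcal{T}_1^3(\lambda)$, operators on $V_1\otimes\cdots\otimes V_L$. Let $|0\rangle=e_1^{\otimes L}$ and let $\langle\bar0|$ be the dual vector of $e_3^{\otimes L}$. *)

(* Defs.v *)
From HB Require Import structures.
From mathcomp Require Import all_boot all_order all_algebra.
From mathcomp Require Import reals.
From mathcomp.analysis Require Import sequences exp trigo.
From mathcomp Require Import complex mxtens.
Set Implicit Arguments. Unset Strict Implicit. Unset Printing Implicit Defensive.
Import Order.TTheory GRing.Theory Num.Theory.
Local Open Scope ring_scope.

Section FZIK.
Variable R : realType.
Local Notation C := (R[i]).

Definition cexp (z : C) : C :=
  let: Complex a b := z in Complex (expR a * cos b) (expR a * sin b).

(* Parameters: s is the fixed square root q^{1/2}, so q = s^2; zeta is zeta. *)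
Variables (s zeta : C).
Local Notation q := (s ^+ 2).

(* q^{(alpha-beta)/2} = s^(alpha-beta) (integer exponent) *)
Definition qhalf (a b : nat) : C := s ^ (a%:Z - b%:Z).

Section Weights.
Variable x : C.
Definition wa : C := (x - zeta) * (x - q ^+ 2).
Definition wb : C := q * (x - 1) * (x - zeta).
Definition wc : C := (1 - q ^+ 2) * (x - zeta).
Definition wcbar : C := x * (1 - q ^+ 2) * (x - zeta).
(* d_{alpha,beta}, alpha, beta in {1,2,3}; beta' = 4 - beta *)
Definition wd (a b : nat) : C :=
  if (a == 2%N) && (b == 2%N) then
    q * (x - 1) * (x - zeta) + x * (q ^+ 2 - 1) * (zeta - 1)
  else if a == b then (x - 1) * ((x - zeta) + x * (q ^+ 2 - 1))
  else if (a < b)%N then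
    (q ^+ 2 - 1) * (zeta * (x - 1) * qhalf a b
                    - (if a == (4 - b)%N then 1 else 0) * (x - zeta))
  else
    x * (q ^+ 2 - 1) * ((x - 1) * qhalf a b
                    - (if a == (4 - b)%N then 1 else 0) * (x - zeta)).

(* entry (r, c) of the 9x9 matrix, rows/columns numbered 1..9 *)
Definition Rentry (r c : nat) : C :=
  match r, c with
  | 1, 1 => wa
  | 2, 2 => wb | 2, 4 => wc
  | 3, 3 => wd 1 1 | 3, 5 => wd 1 2 | 3, 7 => wd 1 3
  | 4, 2 => wcbar | 4, 4 => wb
  | 5, 3 => wd 2 1 | 5, 5 => wd 2 2 | 5, 7 => wd 2 3
  | 6, 6 => wb | 6, 8 => wc
  | 7, 3 => wd 3 1 | 7, 5 => wd 3 2 | 7, 7 => wd 3 3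
  | 8, 6 => wcbar | 8, 8 => wb
  | 9, 9 => wa
  | _, _ => 0%R
  end.
End Weights.

(* R(lambda) as a 9x9 matrix on C^3 (x) C^3, basis e_a (x) e_b has index
   3(a-1) + (b-1) (0-based), x = e^{2 lambda}. *)
Definition Rmat (lam : C) : 'M[C]_(3 * 3) :=
  \matrix_(i, j) Rentry (cexp (2 * lam)) i.+1 j.+1.

(* R_{aj} = sum_{alpha,beta} E_{alpha beta} (x) Rblock alpha beta, where
   Rblock alpha beta acts on V_j. *)
Definition Rblock (lam : C) (al be : 'I_3) : 'M[C]_3 :=
  \matrix_(i, j) Rmat lam (mxtens_index (al, i)) (mxtens_index (be, j)).

Fixpoint qdim (k : nat) : nat := if k is k'.+1 then (qdim k' * 3)%N else 1%N.

(* quantum-space entries T_alpha^beta(lambda) of the monodromy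
   R_{a1}(lambda - mu_1) ... R_{ak}(lambda - mu_k), mu_j = mu j (1-based). *)
Fixpoint Tmon (mu : nat -> C) (k : nat) (lam : C) : 'I_3 -> 'I_3 -> 'M[C]_(qdim k) :=
  match k with
  | 0 => fun al be => (al == be)%:R%:M
  | k'.+1 => fun al be =>
      \sum_(g < 3) (Tmon mu k' lam al g *t Rblock (lam - mu k'.+1) g be)
  end.

(* indices 1,2,3 of the paper are the ordinals 0,1,2 *)
Definition i1 : 'I_3 := ord0.
Definition i2 : 'I_3 := inord 1.
Definition i3 : 'I_3 := inord 2.

Definition Bop mu L lam := Tmon mu L lam i1 i2.
Definition Eop mu L lam := Tmon mu L lam i1 i3.

Definition evec (a : 'I_3) : 'cV[C]_3 := \col_i (i == a)%:R.

Fixpoint vac (k : nat) : 'cV[C]_(qdim k) :=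
  if k is k'.+1 then vac k' *t evec i1 else 1%:M.
Fixpoint bvac (k : nat) : 'cV[C]_(qdim k) :=
  if k is k'.+1 then bvac k' *t evec i3 else 1%:M.

Fixpoint Eprod mu L (lam : nat -> C) (n : nat) : 'M[C]_(qdim L) :=
  if n is n'.+1 then Eop mu L (lam n) *m Eprod mu L lam n' else 1%:M.

Definition Fbar (mu : nat -> C) (L : nat) (v1 v2 : C) (lam : nat -> C) : C :=
  ((bvac L)^T *m Bop mu L v2 *m Bop mu L v1 *m Eprod mu L lam L.-1 *m vac L)
    ord0 ord0.

End FZIK.

(* Main.v *)
Require Import Defs.
From HB Require Import structures.
From mathcomp Require Import all_boot all_order all_algebra.
From mathcomp Require Import reals.
From mathcomp.analysis Require Import sequences exp trigo.
From mathcomp Require Import complex mxtens.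
From mathcomp Require Import ring.
Import Order.TTheory GRing.Theory Num.Theory.
Local Open Scope ring_scope.

Section S.
Variable R : realType.
Variables (s zeta : R[i]).

Lemma entry_gen (x : R[i]) (b k : nat) : (b < 2)%N -> (k < 3)%N ->
  Rentry s zeta x (2 * 3 + 2).+1 (b * 3 + k).+1 = 0.
Proof. by case: b => [|[|]] // _; case: k => [|[|[|]]]. Qed.

Lemma entry_one (g b k : nat) : (g < 3)%N -> (b < 2)%N -> (k < 3)%N ->
  Rentry s zeta 1 (g * 3 + 2).+1 (b * 3 + k).+1 = 0.
Proof.
case: g => [|[|[|]]] // _; case: b => [|[|]] // _; case: k => [|[|[|]]] // _;
rewrite /= /wd /wb /=; ring.
Qed.

Lemma evec3_row (M : 'M[R[i]]_3) : (evec R i3)^T *m M = row i3 M.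
Proof.
rewrite rowE; congr (_ *m _); apply/matrixP => a b; rewrite !mxE.
by rewrite [a]ord1 eqxx.
Qed.

Lemma i3E : (i3 : nat) = 2%N. Proof. by rewrite /i3 inordK. Qed.

Lemma row_Rblock (lam : R[i]) (g be : 'I_3) : be != i3 ->
  (cexp (2 * lam) = 1 \/ g = i3) -> row i3 (Rblock s zeta lam g be) = 0.
Proof.
move=> hbe hor; apply/rowP => k; rewrite !mxE.
have hb : (be < 2)%N.
  move: hbe; rewrite -val_eqE /= i3E; have := ltn_ord be.
  by case: (nat_of_ord be) => [|[|[|]]].
have -> : (mxtens_index (be, k) : nat) = (be * 3 + k)%N by [].
case: hor => [-> | ->].
  have -> : (mxtens_index (g, i3) : nat) = (g * 3 + 2)%N by rewrite /= i3E.
  by apply: entry_one.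
have -> : (mxtens_index (i3, i3) : nat) = (2 * 3 + 2)%N by rewrite /= i3E.
by apply: entry_gen.
Qed.

Lemma key (mu : nat -> R[i]) (lam : R[i]) (j : nat) :
  (1 <= j)%N -> cexp (2 * (lam - mu j)) = 1 ->
  forall k, (j <= k)%N -> forall al be, be != i3 ->
  (bvac R k)^T *m Tmon s zeta mu k lam al be = 0.
Proof.
move=> hj hx; elim => [|k IH] hk al be hbe; first by have := leq_trans hj hk.
rewrite /= (trmx_tens (bvac R k) (evec R i3)) mulmx_sumr big1 // => g _.
rewrite (tensmx_mul (bvac R k)^T (evec R i3)^T) evec3_row.
case: (ltngtP j k.+1) => [hlt | | hjk]; last first.
- by rewrite row_Rblock ?tensmx0 // -hjk; left.
- by rewrite ltnNge hk.
have hjk : (j <= k)%N by [].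
case: (eqVneq g i3) => [-> | hg]; last by rewrite IH ?tens0mx.
by rewrite row_Rblock ?tensmx0 //; right.
Qed.
End S.

Lemma cexpB {R : realType} (z w : R[i]) : cexp (z - w) * cexp w = cexp z.
Proof.
case: z => a b; case: w => c d /=.
set a' := a - c; set b' := b - d.
have ha : a = a' + c by rewrite /a' subrK.
have hb : b = b' + d by rewrite /b' subrK.
rewrite ha hb expRD cosD sinD.
rewrite -[_ * _]/(mulc _ _) /=. congr (Complex _ _); ring.
Qed.

Lemma cexp_neq0 {R : realType} (w : R[i]) : cexp w != 0.
Proof.
case: w => c d /=; apply/negP => /eqP [h1 h2].
have e : expR c != 0 by rewrite gt_eqF // expR_gt0.
move/eqP: h1; rewrite mulf_eq0 (negbTE e) /= => /eqP hc.
move/eqP: h2; rewrite mulf_eq0 (negbTE e) /= => /eqP hs.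
have := cos2Dsin2 d; rewrite hc hs expr0n /= add0r => /eqP; rewrite eq_sym oner_eq0.
by [].
Qed.

Lemma cexp_eq1 {R : realType} {v m : R[i]} : cexp (2 * v) = cexp (2 * m) ->
  cexp (2 * (v - m)) = 1.
Proof.
move=> h; have := cexpB (2 * v) (2 * m); rewrite h mulrBr.
move/eqP; rewrite -subr_eq0 -{2}[cexp (2 * m)]mul1r -mulrBl mulf_eq0.
by rewrite (negbTE (cexp_neq0 _)) orbF subr_eq0 => /eqP.
Qed.

Theorem lemma2p5 (R : realType) (s zeta : R[i]) (L : nat)
    (mu : nat -> R[i]) (v1 v2 : R[i]) (lam : nat -> R[i]) (j : nat) :
  s != 0 ->
  zeta = s ^+ 2 \/ zeta = - (s ^+ 2) ^+ 3 ->
  (1 <= L)%N ->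
  (1 <= j <= L)%N ->
  cexp (2 * v2) = cexp (2 * mu j) ->
  Fbar s zeta mu L v1 v2 lam = 0.
Proof.
move=> _ _ _ /andP [hj hjL] hx.
rewrite /Fbar /Bop (@key R s zeta mu v2 j hj (cexp_eq1 hx) L hjL) //.
  by rewrite !mul0mx mxE.
by rewrite -val_eqE /= i3E /i2 inordK.
Qed.
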